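(* Let $X\subseteq \mathbb{P}^1\times\mathbb{P}^1\times\mathbb{P}^1$ be a variety of lines such that, for each $h=1,2,3$, $U_h(X)$ resembles a Ferrers diagram. Then $X$ has the $Hyp_6(\star)$-property if and only if for all $a_1,a_2\in[d_1]$, $b_1,b_2\in[d_2]$, $c_1,c_2\in[d_3]$, $$\text{either }\left(\begin{array}{cc}\mu_{a_1b_1c_1} & \mu_{a_1b_2c_1}\\ \mu_{a_2b_1c_1} & \mu_{a_2b_2c_1}\end{array}\right)\neq\left(\begin{array}{cc}3&2\\2&2\end{array}\right)\ \text{or}\ \left(\begin{array}{cc}\mu_{a_1b_1c_2} & \mu_{a_1b_2c_2}\\ \mu_{a_2b_1c_2} & \mu_{a_2b_2c_2}\end{array}\right)\neq\left(\begin{array}{cc}2&2\\2&3\end{array}\right).$$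
   Context: $R=K[x_{1,0},x_{1,1},x_{2,0},x_{2,1},x_{3,0},x_{3,1}]$ ($K$ algebraically closed, characteristic zero) trigraded by $\deg x_{i,j}=\mathbf e_i$, coordinate ring of $\mathbb{P}^1\times\mathbb{P}^1\times\mathbb{P}^1$. A variety of lines is written $X= \bigcup_{(i,j)\in U_3(X)} \mathcal{L}(A_i,B_j)\cup\bigcup_{(i,k)\in U_2(X)} \mathcal{L}(A_i,C_k)\cup \bigcup_{(j,k)\in U_1(X)} \mathcal{L}(B_j,C_k)$, where $\mathcal L(A_1),\ldots,\mathcal L(A_{d_1})$, $\mathcal L(B_1),\ldots,\mathcal L(B_{d_2})$, $\mathcal L(C_1),\ldots,\mathcal L(C_{d_3})$ are the distinct hyperplanes containing some line of $X$, defined by linear forms of degrees $(1,0,0),(0,1,0),(0,0,1)$ respectively, $\mathcal L(F,G)$ is the line defined by $(F,G)$, $U_3(X)\subseteq[d_1]\times[d_2]$, $U_2(X)\subseteq[d_1]\times[d_3]$, $U_1(X)\subseteq[d_2]\times[d_3]$, $[n]=\{1,\dots,n\}$. $U_h(X)$ resembles a Ferrers diagram if after permuting each of its two index sets it becomes a set $U$ with: $(u,v)\in U\Rightarrow (u',v')\in U$ for all $1\le u'\le u$, $1\le v'\le v$. For $P_{ijk}=\mathcal L(A_i)\cap\mathcal L(B_j)\cap\mathcal L(C_k)$, the multiplicity $\mu_{ijk}$ is the number of lines of $X$ passing through $P_{ijk}$ (equivalently the number of the lines $\mathcal L(A_i,B_j),\mathcal L(A_i,C_k),\mathcal L(B_j,C_k)$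 that belong to $X$). $X$ has the $Hyp_6(\star)$-property if for any $6$ hyperplanes $H_1,\ldots,H_6$ (each defined by a linear form of degree some $\mathbf e_i$) such that $\mathcal{L}(H_i,H_j)$ is a line of $X$ for all $j\neq i-1,i,i+1$ (indices modulo $6$), there is $u$ with $\mathcal{L}(H_u,H_{u+1})$ a line of $X$. *)

(* Defs.v *)
From mathcomp Require Import all_boot all_order all_algebra.
From mathcomp Require Import perm.
Set Implicit Arguments. Unset Strict Implicit. Unset Printing Implicit Defensive.
Import GRing.Theory.
Local Open Scope ring_scope.

Section Lines.
Variable K : fieldType.

(* A point of P^1 x P^1 x P^1, given by homogeneous coordinates:
   p i = (x_{i,0}, x_{i,1}) for i in {0,1,2} (factors 1,2,3 of the paper),
   each coordinate pair nonzero. *)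
Definition point := 'I_3 -> (K * K).
Definition valid_point (p : point) : Prop := forall i, p i != (0, 0).

(* A linear form of degree e_i : a x_{i,0} + b x_{i,1}. *)
Record linform := LinForm { lf_idx : 'I_3; lf_a : K; lf_b : K }.
Definition lf_nonzero (F : linform) : Prop := (lf_a F, lf_b F) != (0, 0).

Definition Lhyp (F : linform) (p : point) : Prop :=
  valid_point p /\ lf_a F * (p (lf_idx F)).1 + lf_b F * (p (lf_idx F)).2 = 0.

Definition L2 (F G : linform) (p : point) : Prop := Lhyp F p /\ Lhyp G p.

Definition same_set (S T : point -> Prop) : Prop := forall p, S p <-> T p.

Definition i1 : 'I_3 := @Ordinal 3 0 isT.
Definition i2 : 'I_3 := @Ordinal 3 1 isT.
Definition i3 : 'I_3 := @Ordinal 3 2 isT.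

(* Data of a variety of lines X: the hyperplanes L(A_1..A_d1), L(B_1..B_d2),
   L(C_1..C_d3) (coefficient pairs of forms of degree e_1, e_2, e_3),
   and the index sets U_3(X), U_2(X), U_1(X). *)
Record lines_data := LinesData {
  d1 : nat; d2 : nat; d3 : nat;
  Acoef : 'I_d1 -> K * K; Bcoef : 'I_d2 -> K * K; Ccoef : 'I_d3 -> K * K;
  U3 : {set 'I_d1 * 'I_d2};
  U2 : {set 'I_d1 * 'I_d3};
  U1 : {set 'I_d2 * 'I_d3} }.

Variable X : lines_data.

Definition Aform (i : 'I_(d1 X)) := LinForm i1 (@Acoef X i).1 (@Acoef X i).2.
Definition Bform (j : 'I_(d2 X)) := LinForm i2 (@Bcoef X j).1 (@Bcoef X j).2.
Definition Cform (k : 'I_(d3 X)) := LinForm i3 (@Ccoef X k).1 (@Ccoef X k).2.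

(* proportionality of coefficient pairs = same hyperplane *)
Definition proportional (u v : K * K) : bool := u.1 * v.2 == u.2 * v.1.

Definition wf_lines : Prop :=
  (forall i, lf_nonzero (Aform i)) /\ (forall j, lf_nonzero (Bform j)) /\
  (forall k, lf_nonzero (Cform k)) /\
  (forall i i', i != i' -> ~~ proportional (@Acoef X i) (@Acoef X i')) /\
  (forall j j', j != j' -> ~~ proportional (@Bcoef X j) (@Bcoef X j')) /\
  (forall k k', k != k' -> ~~ proportional (@Ccoef X k) (@Ccoef X k')) /\
  (forall i, (exists j, (i, j) \in U3 X) \/ (exists k, (i, k) \in U2 X)) /\
  (forall j, (exists i, (i, j) \in U3 X) \/ (exists k, (j, k) \in U1 X)) /\
  (forall k, (exists i, (i, k) \in U2 X) \/ (exists j, (j, k) \in U1 X)).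

Definition is_line_of_X (F G : linform) : Prop :=
  (exists i j, (i, j) \in U3 X /\ same_set (L2 F G) (L2 (Aform i) (Bform j))) \/
  (exists i k, (i, k) \in U2 X /\ same_set (L2 F G) (L2 (Aform i) (Cform k))) \/
  (exists j k, (j, k) \in U1 X /\ same_set (L2 F G) (L2 (Bform j) (Cform k))).

(* Hyp_6(star): indices of 'I_6 are taken modulo 6. *)
Definition hyp6_star : Prop :=
  forall H : 'I_6 -> linform, (forall u, lf_nonzero (H u)) ->
    (forall i j : 'I_6, j != i -> (j : nat) != (i.+1 %% 6)%N ->
         (i : nat) != (j.+1 %% 6)%N -> is_line_of_X (H i) (H j)) ->
    exists u : 'I_6, is_line_of_X (H u) (H (ordS u)).

Definition mu (i : 'I_(d1 X)) (j : 'I_(d2 X)) (k : 'I_(d3 X)) : nat :=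
  (((i, j) \in U3 X) + ((i, k) \in U2 X) + ((j, k) \in U1 X))%N.

End Lines.

Definition resembles_ferrers (m n : nat) (U : {set 'I_m * 'I_n}) : Prop :=
  exists (s : 'S_m) (t : 'S_n), forall (u u' : 'I_m) (v v' : 'I_n),
    (s u, t v) \in U -> (u' <= u)%N -> (v' <= v)%N -> (s u', t v') \in U.

(* Main.v *)
Require Import Defs.
From mathcomp Require Import all_boot all_order all_algebra.
From mathcomp Require Import perm ring.
From Stdlib Require Import Classical.
Set Implicit Arguments. Unset Strict Implicit. Unset Printing Implicit Defensive.
Import GRing.Theory.
Local Open Scope ring_scope.

Section Geo.
Variable K : fieldType.
Implicit Types F G P Q R : linform K.

Definition zp F : K * K := (- lf_b F, lf_a F).
Definition offp F : K * K := if lf_a F == 0 then (0, 1) else (1, 0).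
Definition sim F P : bool :=
  (lf_idx F == lf_idx P) && (lf_a F * lf_b P == lf_b F * lf_a P).

Lemma nzE F : lf_nonzero F -> (lf_a F != 0) || (lf_b F != 0).
Proof. by rewrite /lf_nonzero xpair_eqE negb_and. Qed.

Lemma ev_z F : lf_a F * (zp F).1 + lf_b F * (zp F).2 = 0.
Proof. rewrite /=; ring. Qed.

Lemma ev_off F : lf_nonzero F -> lf_a F * (offp F).1 + lf_b F * (offp F).2 != 0.
Proof.
move/nzE; rewrite /offp; case: eqP => [->|ha] /=.
  by rewrite mulr0 mulr1 add0r.
by rewrite mulr1 mulr0 addr0 => _; apply/eqP.
Qed.

Lemma z_nz F : lf_nonzero F -> zp F != (0, 0).
Proof. by move/nzE; rewrite /zp xpair_eqE oppr_eq0 negb_and orbC. Qed.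

Lemma off_nz F : offp F != (0, 0).
Proof. by rewrite /offp; case: ifP; rewrite xpair_eqE ?oner_eq0 ?andbF. Qed.

Lemma prop_zero (a b c d x y : K) : (a != 0) || (b != 0) -> a * d = b * c ->
  a * x + b * y = 0 -> c * x + d * y = 0.
Proof.
case/orP => hn hp he.
  apply: (mulfI hn); rewrite mulr0.
  have -> : a * (c * x + d * y) = c * (a * x + b * y) + (a * d - b * c) * y by ring.
  by rewrite he hp subrr; ring.
apply: (mulfI hn); rewrite mulr0.
have -> : b * (c * x + d * y) = d * (a * x + b * y) + (b * c - a * d) * x by ring.
by rewrite he hp subrr; ring.
Qed.

Lemma Lhyp_sim F P p : lf_nonzero F -> lf_nonzero P -> sim F P ->
  Lhyp F p <-> Lhyp P p.
Proof.
move=> /nzE hF /nzE hP /andP[/eqP hi /eqP hp]; rewrite /Lhyp hi.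
split=> -[hv he]; split => //.
  by apply: (prop_zero hF hp).
apply: (prop_zero hP) he; by rewrite [LHS]mulrC -hp [RHS]mulrC.
Qed.

Lemma step1 P Q R : lf_nonzero P -> lf_nonzero Q -> lf_nonzero R ->
  lf_idx P != lf_idx Q -> (forall p, L2 P Q p -> Lhyp R p) -> sim R P || sim R Q.
Proof.
move=> hP hQ hR hPQ H.
pose p := fun i => if i == lf_idx P then zp P else if i == lf_idx Q then zp Q else offp R.
have hv : valid_point p.
  move=> i; rewrite /p; case: ifP => _; first exact: z_nz.
  case: ifP => _; [exact: z_nz|exact: off_nz].
have hL : L2 P Q p.
  split; split => //; rewrite /p ?eqxx; first exact: ev_z.
  rewrite /p eq_sym (negbTE hPQ); exact: ev_z.
have [_] := H p hL.
rewrite /p /sim.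
case: eqP => [->|_] /=.
  move=> h; apply/orP; left; apply/eqP; apply/eqP; rewrite -subr_eq0; apply/eqP.
  by rewrite -[RHS]oppr0 -h; ring.
case: (eqVneq (lf_idx R) (lf_idx Q)) => [e|ne] /=.
  move=> h; apply/eqP; apply/eqP; rewrite -subr_eq0; apply/eqP.
  by rewrite -[RHS]oppr0 -h; ring.
by move/eqP; rewrite (negbTE (ev_off hR)).
Qed.


Lemma step2 P Q : lf_nonzero P -> lf_nonzero Q ->
  lf_idx P != lf_idx Q -> ~ (forall p, Lhyp P p -> Lhyp Q p).
Proof.
move=> hP hQ hPQ H.
pose p := fun i => if i == lf_idx P then zp P else offp Q.
have hv : valid_point p.
  move=> i; rewrite /p; case: ifP => _; [exact: z_nz|exact: off_nz].
have hL : Lhyp P p by split => //; rewrite /p eqxx; apply: ev_z.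
have [_] := H p hL.
by rewrite /p eq_sym (negbTE hPQ); move/eqP; rewrite (negbTE (ev_off hQ)).
Qed.

Lemma key F G P Q : lf_nonzero F -> lf_nonzero G -> lf_nonzero P -> lf_nonzero Q ->
  lf_idx P != lf_idx Q -> same_set (L2 F G) (L2 P Q) ->
  (sim F P && sim G Q) || (sim F Q && sim G P).
Proof.
move=> hF hG hP hQ hPQ hs.
have /orP[fP|fQ] := step1 hP hQ hF hPQ (fun p h => ((proj2 (hs p)) h).1);
have /orP[gP|gQ] := step1 hP hQ hG hPQ (fun p h => ((proj2 (hs p)) h).2);
rewrite ?fP ?gP ?fQ ?gQ ?orbT //.
- exfalso; apply: (step2 hP hQ hPQ) => p hp.
  have hl : L2 F G p by split; [exact: (proj2 (Lhyp_sim p hF hP fP) hp)|exact: (proj2 (Lhyp_sim p hG hP gP) hp)].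
  by have [] := proj1 (hs p) hl.
- exfalso; apply: (step2 hQ hP); first by rewrite eq_sym. move=> p hp.
  have hl : L2 F G p by split; [exact: (proj2 (Lhyp_sim p hF hQ fQ) hp)|exact: (proj2 (Lhyp_sim p hG hQ gQ) hp)].
  by have [] := proj1 (hs p) hl.
Qed.

Lemma prop_trans (f1 f2 p1 p2 q1 q2 : K) : (f1 != 0) || (f2 != 0) ->
  f1 * p2 = f2 * p1 -> f1 * q2 = f2 * q1 -> p1 * q2 = p2 * q1.
Proof.
case/orP => hn hp hq; apply/eqP; rewrite -subr_eq0; apply/eqP; apply: (mulfI hn); rewrite mulr0.
  have -> : f1 * (p1 * q2 - p2 * q1) = p1 * (f1 * q2) - (f1 * p2) * q1 by ring.
  by rewrite hp hq; ring.
have -> : f2 * (p1 * q2 - p2 * q1) = (f2 * p1) * q2 - p2 * (f2 * q1) by ring.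
by rewrite -hp -hq; ring.
Qed.

End Geo.

Section Names.
Variable K : fieldType.
Variable X : lines_data K.
Hypothesis wf : wf_lines X.

Definition N := ('I_(d1 X) + 'I_(d2 X) + 'I_(d3 X))%type.
Definition form_of (x : N) : linform K :=
  match x with inl (inl i) => Aform i | inl (inr j) => Bform j | inr k => Cform k end.
Definition E (x y : N) : bool := match x, y with
| inl (inl i), inl (inr j) => (i,j) \in U3 X
| inl (inr j), inl (inl i) => (i,j) \in U3 X
| inl (inl i), inr k => (i,k) \in U2 X
| inr k, inl (inl i) => (i,k) \in U2 X
| inl (inr j), inr k => (j,k) \in U1 X
| inr k, inl (inr j) => (j,k) \in U1 X
| _, _ => false end.

Lemma E_sym x y : E x y = E y x.
Proof. by case: x => [[?|?]|?]; case: y => [[?|?]|?]. Qed.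

Lemma form_nz x : lf_nonzero (form_of x).
Proof.
case: wf => hA [hB [hC _]].
by case: x => [[i|j]|k]; [apply: hA|apply: hB|apply: hC].
Qed.

Lemma sim_refl (F : linform K) : sim F F.
Proof. by rewrite /sim eqxx mulrC eqxx. Qed.

Lemma same_sym (F G : linform K) : same_set (L2 F G) (L2 G F).
Proof. by move=> p; rewrite /L2; split=> -[]. Qed.

Lemma same_refl (F G : linform K) : same_set (L2 F G) (L2 F G).
Proof. by []. Qed.

Lemma E_line x y : E x y -> is_line_of_X X (form_of x) (form_of y).
Proof.
case: x => [[i|j]|k]; case: y => [[i'|j']|k'] //= h.
- by left; exists i, j'; split => //.
- by right; left; exists i, k'; split => //.
- by left; exists i', j; split => //; apply: same_sym.
- by right; right; exists j, k'; split => //.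
- by right; left; exists i', k; split => //; apply: same_sym.
- by right; right; exists j', k; split => //; apply: same_sym.
Qed.

Lemma line_sim (F G : linform K) : lf_nonzero F -> lf_nonzero G ->
  is_line_of_X X F G -> exists x y, [&& sim F (form_of x), sim G (form_of y) & E x y].
Proof.
move=> hF hG [[i [j [h hs]]]|[[i [k [h hs]]]|[j [k [h hs]]]]].
- have /orP[/andP[h1 h2]|/andP[h1 h2]] := key hF hG (form_nz (inl (inl i))) (form_nz (inl (inr j))) isT hs.
    by exists (inl (inl i)), (inl (inr j)); rewrite h1 h2.
  by exists (inl (inr j)), (inl (inl i)); rewrite h1 h2.
- have /orP[/andP[h1 h2]|/andP[h1 h2]] := key hF hG (form_nz (inl (inl i))) (form_nz (inr k)) isT hs.
    by exists (inl (inl i)), (inr k); rewrite h1 h2.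
  by exists (inr k), (inl (inl i)); rewrite h1 h2.
- have /orP[/andP[h1 h2]|/andP[h1 h2]] := key hF hG (form_nz (inl (inr j))) (form_nz (inr k)) isT hs.
    by exists (inl (inr j)), (inr k); rewrite h1 h2.
  by exists (inr k), (inl (inr j)); rewrite h1 h2.
Qed.

Lemma sim_uniq (F : linform K) x y : lf_nonzero F ->
  sim F (form_of x) -> sim F (form_of y) -> x = y.
Proof.
case: wf => _ [_ [_ [hA [hB [hC _]]]]].
move=> /nzE hF.
case: x => [[i|j]|k]; case: y => [[i'|j']|k'];
  rewrite /sim /= => /andP[/eqP e1 /eqP p1] /andP[/eqP e2 /eqP p2];
  rewrite ?e1 in e2 => //.
- case: (eqVneq i i') => [->//|/hA]; rewrite /proportional.
  by rewrite (prop_trans hF p1 p2) eqxx.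
- case: (eqVneq j j') => [->//|/hB]; rewrite /proportional.
  by rewrite (prop_trans hF p1 p2) eqxx.
- case: (eqVneq k k') => [->//|/hC]; rewrite /proportional.
  by rewrite (prop_trans hF p1 p2) eqxx.
Qed.

Lemma line_E x y : is_line_of_X X (form_of x) (form_of y) -> E x y.
Proof.
case/(line_sim (form_nz x) (form_nz y)) => x' [y' /and3P[h1 h2 h3]].
by rewrite (sim_uniq (form_nz x) (sim_refl _) h1) (sim_uniq (form_nz y) (sim_refl _) h2).
Qed.

Lemma sim_line (F G : linform K) x y : lf_nonzero F -> lf_nonzero G ->
  sim F (form_of x) -> sim G (form_of y) -> E x y -> is_line_of_X X F G.
Proof.
move=> hF hG h1 h2 /E_line.
have hs : same_set (L2 F G) (L2 (form_of x) (form_of y)).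
  move=> p; rewrite /L2 (Lhyp_sim p hF (form_nz x) h1) (Lhyp_sim p hG (form_nz y) h2).
  by [].
have tr : forall S, same_set (L2 (form_of x) (form_of y)) S -> same_set (L2 F G) S.
  by move=> S hS p; rewrite hs hS.
case=> [[i [j [h hS]]]|[[i [k [h hS]]]|[j [k [h hS]]]]].
- by left; exists i, j; split => //; apply: tr.
- by right; left; exists i, k; split => //; apply: tr.
- by right; right; exists j, k; split => //; apply: tr.
Qed.

End Names.

Local Close Scope ring_scope.
Section Core.
Variable K : fieldType.
Variable X : lines_data K.

Definition pattern (a1 a2 : 'I_(d1 X)) (b1 b2 : 'I_(d2 X)) (c1 c2 : 'I_(d3 X)) :=
  (((mu a1 b1 c1, mu a1 b2 c1), (mu a2 b1 c1, mu a2 b2 c1)) = ((3, 2), (2, 2))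
  /\ ((mu a1 b1 c2, mu a1 b2 c2), (mu a2 b1 c2, mu a2 b2 c2)) = ((2, 2), (2, 3)))%N.

Ltac rw_mem := repeat match goal with
 | h : is_true ?P |- context[?P] => rewrite h
 | h : ?P = false |- context[?P] => rewrite h
 end.

Ltac findw := match goal with
 | a : 'I_(d1 _), a' : 'I_(d1 _), b : 'I_(d2 _), b' : 'I_(d2 _),
   c : 'I_(d3 _), c' : 'I_(d3 _) |- _ =>
   exists a, a', b, b', c, c'; rewrite /pattern /mu; rw_mem; split; reflexivity
 end.

Lemma core (n0 n1 n2 n3 n4 n5 : N X) :
  E n0 n2 -> E n2 n4 -> E n4 n0 -> E n1 n3 -> E n3 n5 -> E n5 n1 ->
  E n0 n3 -> E n1 n4 -> E n2 n5 ->
  E n0 n1 = false -> E n1 n2 = false -> E n2 n3 = false ->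
  E n3 n4 = false -> E n4 n5 = false -> E n5 n0 = false ->
  exists a1 a2 b1 b2 c1 c2, pattern a1 a2 b1 b2 c1 c2.
Proof.
case: n0 => [[?|?]|?]; case: n2 => [[?|?]|?] => //=;
case: n4 => [[?|?]|?] => //=;
case: n1 => [[?|?]|?] => //=;
case: n3 => [[?|?]|?] => //=;
case: n5 => [[?|?]|?] => //= *; findw.
Qed.

Lemma bool_core (p11 p12 p21 p22 q11 q12 q21 q22 r11 r12 r21 r22 : bool) :
 ((p11+q11+r11, p12+q11+r21), (p21+q21+r11, p22+q21+r21)) = ((3,2),(2,2))%N ->
 ((p11+q12+r12, p12+q12+r22), (p21+q22+r12, p22+q22+r22)) = ((2,2),(2,3))%N ->
 [&& p11, q11, r11, p22, q22, r22 &
   ((p12 && q21 && r12 && ~~p21 && ~~q12 && ~~r21) ||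
    (~~p12 && ~~q21 && ~~r12 && p21 && q12 && r21))].
Proof.
case: p11; case: q11; case: r11 => //;
case: p22; case: q22; case: r22 => //;
case: p12; case: r21 => //; case: q21 => //; case: p21 => //;
case: q12; case: r12 => //.
Qed.

End Core.
Local Open Scope ring_scope.

Unset Implicit Arguments. Set Strict Implicit. Set Printing Implicit Defensive.

Lemma fromConf (K : fieldType) (X : lines_data K) (hX : wf_lines X) (hyp : hyp6_star X)
  (n0 n1 n2 n3 n4 n5 : N X) :
  E n0 n2 -> E n2 n4 -> E n4 n0 -> E n1 n3 -> E n3 n5 -> E n5 n1 ->
  E n0 n3 -> E n1 n4 -> E n2 n5 ->
  E n0 n1 = false -> E n1 n2 = false -> E n2 n3 = false ->
  E n3 n4 = false -> E n4 n5 = false -> E n5 n0 = false -> False.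
Proof.
move=> f02 f24 f40 f13 f35 f51 f03 f14 f25 g01 g12 g23 g34 g45 g50.
pose s := [:: n0; n1; n2; n3; n4; n5].
have [|u] := hyp (fun u : 'I_6 => form_of (nth n0 s u)) (fun u => form_nz hX _).
  move=> [[|[|[|[|[|[|i]]]]]] hi] [[|[|[|[|[|[|j]]]]]] hj] //= _ _ _;
  by apply: E_line; rewrite // E_sym.
case: u => -[|[|[|[|[|[|i]]]]]] hu // /(line_E hX) /= h;
  by rewrite ?g01 ?g12 ?g23 ?g34 ?g45 ?g50 in h.
Qed.

Definition o0 : 'I_6 := @Ordinal 6 0 isT.
Definition o1 : 'I_6 := @Ordinal 6 1 isT.
Definition o2 : 'I_6 := @Ordinal 6 2 isT.
Definition o3 : 'I_6 := @Ordinal 6 3 isT.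
Definition o4 : 'I_6 := @Ordinal 6 4 isT.
Definition o5 : 'I_6 := @Ordinal 6 5 isT.

Theorem proposition3p6 (K : closedFieldType) (hchar : [pchar K] =i pred0)
  (X : lines_data K) (hX : wf_lines X)
  (hF3 : resembles_ferrers (U3 X)) (hF2 : resembles_ferrers (U2 X))
  (hF1 : resembles_ferrers (U1 X)) :
  hyp6_star X <->
  (forall (a1 a2 : 'I_(d1 X)) (b1 b2 : 'I_(d2 X)) (c1 c2 : 'I_(d3 X)),
     ((mu a1 b1 c1, mu a1 b2 c1), (mu a2 b1 c1, mu a2 b2 c1)) != ((3, 2), (2, 2))
  \/ ((mu a1 b1 c2, mu a1 b2 c2), (mu a2 b1 c2, mu a2 b2 c2)) != ((2, 2), (2, 3)))%N.
Proof.
split.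
- move=> hyp a1 a2 b1 b2 c1 c2.
  case: (boolP (_ != ((3,2),(2,2))%N)) => [h|/negPn/eqP e1]; first by left.
  right; apply/eqP => e2.
  have := bool_core e1 e2.
  case/andP => h1 /andP[h2 /andP[h3 /andP[h4 /andP[h5 /andP[h6 ]]]]] /orP[/andP[/andP[/andP[/andP[/andP[t1 t2] t3] t4] t5] t6]|/andP[/andP[/andP[/andP[/andP[t1 t2] t3] t4] t5] t6]].
  + apply: (@fromConf _ X hX hyp (inl (inl a1)) (inl (inl a2)) (inl (inr b1))
       (inl (inr b2)) (inr c1) (inr c2)) => //=; exact: negbTE.
  + apply: (@fromConf _ X hX hyp (inl (inl a1)) (inl (inr b2)) (inl (inr b1))
       (inr c2) (inr c1) (inl (inl a2))) => //=; exact: negbTE.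
- move=> hM H Hnz Hprem; apply: NNPP => hno.
  have hl : forall u v : 'I_6, is_line_of_X X (H u) (H v) ->
      exists x : N X, sim (H u) (form_of x).
    move=> u v /(line_sim hX (Hnz u) (Hnz v)) [x [y /and3P[h1 _ _]]].
    by exists x.
  have hex : forall u, exists x : N X, sim (H u) (form_of x).
    case=> -[|[|[|[|[|[|i]]]]]] hu //.
    + by apply: (hl _ o2); apply: Hprem.
    + by apply: (hl _ o3); apply: Hprem.
    + by apply: (hl _ o4); apply: Hprem.
    + by apply: (hl _ o5); apply: Hprem.
    + by apply: (hl _ o0); apply: Hprem.
    + by apply: (hl _ o1); apply: Hprem.
  have [x0 _] := hex o0.
  pose nu u := odflt x0 [pick x | sim (H u) (form_of x)].
  have hnu : forall u, sim (H u) (form_of (nu u)).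
    move=> u; rewrite /nu; case: pickP => [x //|hn].
    by have [x hx] := hex u; rewrite hn in hx.
  have lineE : forall u v, is_line_of_X X (H u) (H v) <-> E (nu u) (nu v).
    move=> u v; split.
      case/(line_sim hX (Hnz u) (Hnz v)) => x [y /and3P[h1 h2 h3]].
      by rewrite -(sim_uniq hX (Hnz u) h1 (hnu u)) -(sim_uniq hX (Hnz v) h2 (hnu v)).
    move=> hE; exact: (sim_line hX (Hnz u) (Hnz v) (hnu u) (hnu v) hE).
  have T : forall u v : 'I_6, v != u -> (v : nat) != (u.+1 %% 6)%N -> (u : nat) != (v.+1 %% 6)%N ->
      E (nu u) (nu v).
    by move=> u v h1 h2 h3; apply/lineE; apply: Hprem.
  have F : forall u v : 'I_6, ordS u = v -> E (nu u) (nu v) = false.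
    move=> u v <-; apply/negbTE/negP => /lineE h; apply: hno; by exists u.
  have [a1 [a2 [b1 [b2 [c1 [c2 [e1 e2]]]]]]] :=
    @core _ X (nu o0) (nu o1) (nu o2) (nu o3) (nu o4) (nu o5)
      (T o0 o2 isT isT isT) (T o2 o4 isT isT isT) (T o4 o0 isT isT isT)
      (T o1 o3 isT isT isT) (T o3 o5 isT isT isT) (T o5 o1 isT isT isT)
      (T o0 o3 isT isT isT) (T o1 o4 isT isT isT) (T o2 o5 isT isT isT)
      (F o0 o1 (val_inj (erefl : val (ordS o0) = val o1))) (F o1 o2 (val_inj (erefl : val (ordS o1) = val o2))) (F o2 o3 (val_inj (erefl : val (ordS o2) = val o3)))
      (F o3 o4 (val_inj (erefl : val (ordS o3) = val o4))) (F o4 o5 (val_inj (erefl : val (ordS o4) = val o5))) (F o5 o0 (val_inj (erefl : val (ordS o5) = val o0))).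
  by case: (hM a1 a2 b1 b2 c1 c2); rewrite ?e1 ?e2.
Qed.
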